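(* Let $G$ be a group definable in a model $M$ of an NIP theory, and let $\mu$ be a translation-invariant Keisler measure on the definable subsets of $G$. Then for every $g\in G$, the translation $U\mapsto g\cdot U$ has entropy zero with respect to $\mu$.
   Context: A Keisler measure on the definable subsets of $G$ (with parameters from $M$) is a finitely additive probability measure on them; invariance means $\mu(gU)=\mu(U)$ for all $g\in G$ and definable $U\subseteq G$. Entropy is the measure-theoretic (Kolmogorov–Sinai) entropy: for a finite partition $P$, $h(\tau,P)=\lim_n\frac1n H(\bigvee_{i=0}^{n-1}\tau^{-i}P)$ with $H(Q)=-\sum_{C\in Q}\mu(C)\log\mu(C)$, and the entropy of $\tau$ is the supremum over partitions. *)

(* Defs.v *)
From HB Require Import structures.
From mathcomp Require Import all_boot all_order all_algebra.
From mathcomp Require Import all_classical all_reals all_analysis.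
Set Implicit Arguments. Unset Strict Implicit. Unset Printing Implicit Defensive.
Import Order.TTheory GRing.Theory Num.Theory.
Local Open Scope classical_set_scope.
Local Open Scope ring_scope.

(* A first-order structure M is represented by the system of its          *)
(* definable-with-parameters subsets of the powers M^n = ('I_n -> M).     *)
(* Any family closed under the operations below is exactly the system of  *)
(* parameter-definable sets of the structure (M, (R_A)_A) with one         *)
(* relation symbol per member, and conversely.                            *)

Definition tconcat (M : Type) (m n : nat) (x : 'I_m -> M) (y : 'I_n -> M)
  : 'I_(m + n) -> M :=
  fun i => match fintype.split i with inl j => x j | inr j => y j end.

Record def_system (M : Type) (D : forall n : nat, set (set ('I_n -> M))) : Prop :=
  DefSystem {
    ds_nonempty : inhabited M;
    ds_top : forall n, D n setT;
    ds_compl : forall n (A : set ('I_n -> M)), D n A -> D n (~` A);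
    ds_inter : forall n (A B : set ('I_n -> M)), D n A -> D n B -> D n (A `&` B);
    ds_eq : forall n (i j : 'I_n), D n [set x | x i = x j];
    ds_const : forall n (i : 'I_n) (a : M), D n [set x | x i = a];
    ds_reindex : forall m n (f : 'I_n -> 'I_m) (A : set ('I_n -> M)),
        D n A -> D m [set z | A (fun i => z (f i))];
    ds_proj : forall m n (A : set ('I_(m + n) -> M)),
        D (m + n) A -> D m [set x | exists y : 'I_n -> M, A (tconcat x y)]
  }.

(* NIP: no definable relation D(x;y) has the independence property, i.e.  *)
(* for each such D there is N such that no N tuples a_0..a_{N-1} are      *)
(* shattered by the fibres D(-, b).  (Since IP of a formula is witnessed   *)
(* by finite configurations, this holds in M iff Th(M) is NIP.)           *)
Definition NIP (M : Type) (D : forall n : nat, set (set ('I_n -> M))) : Prop :=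
  forall m n (Phi : set ('I_(m + n) -> M)), D (m + n) Phi ->
    exists N : nat, forall a : 'I_N -> ('I_m -> M),
      ~ (forall J : set 'I_N, exists b : 'I_n -> M,
           forall i : 'I_N, Phi (tconcat (a i) b) <-> J i).

Definition definable_group (M : Type) (D : forall n : nat, set (set ('I_n -> M)))
  (k : nat) (G : set ('I_k -> M)) (mul : ('I_k -> M) -> ('I_k -> M) -> ('I_k -> M))
  : Prop :=
  [/\ D k G,
      (exists Gr : set ('I_(k + k + k) -> M), D (k + k + k) Gr /\
         forall x y w, Gr (tconcat (tconcat x y) w) <-> (G x /\ G y /\ w = mul x y)),
      (forall x y, G x -> G y -> G (mul x y)),
      (forall x y z, G x -> G y -> G z -> mul (mul x y) z = mul x (mul y z)) &
      (exists2 e, G e & forall x, G x ->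
         [/\ mul e x = x, mul x e = x & exists2 y, G y & mul y x = e /\ mul x y = e])].

Definition ltrans (M : Type) (k : nat) (mul : ('I_k -> M) -> ('I_k -> M) -> ('I_k -> M))
  (g : 'I_k -> M) (U : set ('I_k -> M)) : set ('I_k -> M) :=
  [set mul g u | u in U].

Definition keisler_measure (R : realType) (M : Type)
  (D : forall n : nat, set (set ('I_n -> M))) (k : nat) (G : set ('I_k -> M))
  (mu : set ('I_k -> M) -> R) : Prop :=
  [/\ (forall U, D k U -> U `<=` G -> 0 <= mu U),
      mu G = 1 &
      (forall U V, D k U -> D k V -> U `<=` G -> V `<=` G -> U `&` V = set0 ->
         mu (U `|` V) = mu U + mu V)].

Definition invariant_measure (R : realType) (M : Type)
  (D : forall n : nat, set (set ('I_n -> M))) (k : nat) (G : set ('I_k -> M))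
  (mul : ('I_k -> M) -> ('I_k -> M) -> ('I_k -> M)) (mu : set ('I_k -> M) -> R) : Prop :=
  forall g U, G g -> D k U -> U `<=` G -> mu (ltrans mul g U) = mu U.

Definition definable_partition (M : Type) (D : forall n : nat, set (set ('I_n -> M)))
  (k : nat) (G : set ('I_k -> M)) (p : nat) (P : 'I_p -> set ('I_k -> M)) : Prop :=
  [/\ (forall j, D k (P j)), (forall j, P j `<=` G),
      (forall j j', j != j' -> P j `&` P j' = set0) &
      (forall x, G x -> exists j, P j x)].

(* tau^{-1}(U) for tau : U |-> g.U, i.e. g^{-1}.U = {x in G | g x in U} *)
Definition tau_inv (M : Type) (k : nat) (G : set ('I_k -> M))
  (mul : ('I_k -> M) -> ('I_k -> M) -> ('I_k -> M)) (g : 'I_k -> M)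
  (U : set ('I_k -> M)) : set ('I_k -> M) :=
  [set x | G x /\ U (mul g x)].

Definition xlogx (R : realType) (x : R) : R := if x == 0 then 0 else x * ln x.

(* H( \/_{i<n} tau^{-i} P ): cells of the join are indexed by s : 'I_n -> 'I_p *)
Definition join_entropy (R : realType) (M : Type) (k : nat) (G : set ('I_k -> M))
  (mul : ('I_k -> M) -> ('I_k -> M) -> ('I_k -> M)) (mu : set ('I_k -> M) -> R)
  (g : 'I_k -> M) (p : nat) (P : 'I_p -> set ('I_k -> M)) (n : nat) : R :=
  - \sum_(s : {ffun 'I_n -> 'I_p})
      xlogx (mu [set x | G x /\ forall i : 'I_n, iter i (tau_inv G mul g) (P (s i)) x]).

(* Main.v *)
Require Import Defs.
From HB Require Import structures.
From mathcomp Require Import all_boot all_order all_algebra.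
From mathcomp Require Import all_classical all_reals all_analysis.
Import Order.TTheory GRing.Theory Num.Theory.
Import numFieldNormedType.Exports.
Local Open Scope classical_set_scope.
Local Open Scope ring_scope.
Set Implicit Arguments. Unset Strict Implicit. Unset Printing Implicit Defensive.
Lemma tconcatL (M : Type) m n (x : 'I_m -> M) (y : 'I_n -> M) i : tconcat x y (lshift n i) = x i.
Proof. by rewrite /tconcat (unsplitK (inl i : 'I_m + 'I_n)). Qed.
Lemma tconcatR (M : Type) m n (x : 'I_m -> M) (y : 'I_n -> M) i : tconcat x y (rshift m i) = y i.
Proof. by rewrite /tconcat (unsplitK (inr i : 'I_m + 'I_n)). Qed.

Lemma D_ext (M : Type) (D : forall n, set (set ('I_n -> M))) n (A B : set ('I_n -> M)) :
  D n A -> (forall x, A x <-> B x) -> D n B.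
Proof.
move=> hA hAB; have -> : B = A by apply/funext => x; apply/propext; split => /hAB.
done.
Qed.

Lemma D_set0 (M : Type) (D : forall n, set (set ('I_n -> M))) n :
  def_system D -> D n set0.
Proof.
move=> hD; apply: (D_ext (ds_compl hD (ds_top hD n))) => x; split => //.
by move=> /=; apply.
Qed.

Lemma D_setU (M : Type) (D : forall n, set (set ('I_n -> M))) n A B :
  def_system D -> D n A -> D n B -> D n (A `|` B).
Proof.
move=> hD hA hB.
apply: (D_ext (ds_compl hD (ds_inter hD (ds_compl hD hA) (ds_compl hD hB)))) => x.
split.
  by move=> /= h; apply: contrapT => /not_orP [h1 h2]; apply: h.
by move=> [h|h] /= [h1 h2]; [apply: h1|apply: h2].
Qed.

Lemma D_bigI (M : Type) (D : forall n, set (set ('I_n -> M))) n (T : eqType)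
  (F : T -> set ('I_n -> M)) (r : seq T) :
  def_system D -> (forall i, D n (F i)) -> D n [set x | forall i, i \in r -> F i x].
Proof.
move=> hD hF; elim: r => [|a r IH].
  by apply: (D_ext (ds_top hD n)) => x; split.
apply: (D_ext (ds_inter hD (hF a) IH)) => x; split.
  move=> [h1 h2] i; rewrite inE => /orP [/eqP ->//|]; exact: h2.
move=> h; split; first by apply: h; rewrite inE eqxx.
by move=> i hi; apply: h; rewrite inE hi orbT.
Qed.

Lemma D_subst (M : Type) (D : forall n, set (set ('I_n -> M))) m n
  (B : set ('I_(m + n) -> M)) (c : 'I_m -> M) :
  def_system D -> D (m + n) B -> D n [set x | B (tconcat c x)].
Proof.
move=> hD hB.
pose E := B `&` [set z | forall i, i \in enum 'I_m -> z (lshift n i) = c i].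
have hE : D (m + n) E.
  apply: (ds_inter hD hB); apply: (D_bigI _ hD) => i; exact: ds_const.
pose f : 'I_(m + n) -> 'I_(n + m) :=
  fun i => match fintype.split i with inl j => rshift n j | inr j => lshift m j end.
have hf : forall (x : 'I_n -> M) (y : 'I_m -> M),
    (fun i => tconcat x y (f i)) = tconcat y x.
  move=> x y; apply/funext => i; rewrite /f {2}/tconcat.
  by case: (fintype.split i) => j; rewrite ?tconcatL ?tconcatR.
have := ds_proj hD (ds_reindex hD f hE).
move=> h; apply: (D_ext h) => x /=; split.
  move=> [y]; rewrite hf => -[hB' hy].
  suff <- : y = c by [].
  apply/funext => i; rewrite -(hy i (mem_enum _ i)); by rewrite tconcatL.
move=> hx; exists c; rewrite hf; split => // i _; by rewrite tconcatL.
Qed.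

Lemma D_graph (M : Type) (D : forall n, set (set ('I_n -> M))) k
  (Gr : set ('I_(k + k + k) -> M)) (U : set ('I_k -> M)) :
  def_system D -> D (k + k + k) Gr -> D k U ->
  D (k + k) [set z | exists w, Gr (tconcat z w) /\ U w].
Proof.
move=> hD hGr hU.
have := ds_proj hD (ds_inter hD hGr (ds_reindex hD (@rshift (k + k) k) hU)).
move=> h; apply: (D_ext h) => z /=; split => -[w hw]; exists w; move: hw;
  have -> // : (fun i => tconcat z w (rshift (k + k) i)) = w;
  by apply/funext => i; rewrite tconcatR.
Qed.
From mathcomp Require Import ring lra.
Lemma xlogx_le0 (R : realType) (q : R) : 0 <= q -> q <= 1 -> xlogx q <= 0.
Proof.
move=> q0 q1; rewrite /xlogx; case: eqP => // /eqP qn0.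
by rewrite mulr_ge0_le0 // ln_le0.
Qed.

Lemma xlogx_bound (R : realType) (q L : R) (b : bool) :
  0 <= q -> 0 < L -> (q != 0 -> b) -> - xlogx q <= b%:R / L + q * ln L.
Proof.
move=> q0 L0 hb; rewrite /xlogx; case: eqP => [->|/eqP qn0].
  by rewrite oppr0 mul0r addr0 divr_ge0 // ltW.
have qp : 0 < q by rewrite lt_neqAle eq_sym qn0.
rewrite (hb qn0) mul1r.
have qL : 0 < q * L by rewrite mulr_gt0.
have h1 : ln ((q * L)^-1) <= (q * L)^-1 - 1.
  have := @le_ln1Dx R ((q * L)^-1 - 1); rewrite addrCA subrr addr0; apply.
  by rewrite ltrBrDr addrC subrr invr_gt0.
rewrite lnV ?posrE // lnM ?posrE // in h1.
have h2 := ler_wpM2l (ltW qp) h1.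
have e : q * ((q * L)^-1 - 1) = L^-1 - q.
  by rewrite mulrBr mulr1 invfM mulrA mulfV ?mul1r // gt_eqF.
rewrite e mulrN mulrDr in h2.
have : 0 <= q by [].
lra.
Qed.
Lemma ln_le_lin (R : realType) (y m : R) : 0 < y -> 0 < m -> ln y <= y / m + ln m.
Proof.
move=> y0 m0; have := @le_ln1Dx R (y / m - 1); rewrite addrCA subrr addr0.
rewrite ln_div ?posrE //; have : -1 < y / m - 1.
  by rewrite ltrBrDr addrC subrr divr_gt0.
move=> h /(_ h) h2; lra.
Qed.

Lemma lim_bound (R : realType) (C : nat) (h : nat -> R) :
  (forall n, 0 <= h n) -> (forall n, h n <= 1 + C%:R * ln (n.+1%:R)) ->
  (fun n => n%:R^-1 * h n) @ \oo --> (0 : R).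
Proof.
move=> h0 hb; apply/cvgrPdist_le => e e0.
set c : R := C%:R + 1.
have c0 : 0 < c by rewrite /c ltr_pwDr // ler0n.
set m : R := 4 * c / e.
have m0 : 0 < m by rewrite /m divr_gt0 // mulr_gt0.
set K : R := 1 + c * ln m.
have hK : forall n : nat, h n <= K + e * (n.+1%:R) / 4.
  move=> n; apply: (le_trans (hb n)).
  have l0 : 0 <= ln (n.+1%:R : R) by rewrite ln_ge0 // ler1n.
  have h1 := ln_le_lin (y := n.+1%:R : R) (ltr0Sn _ _) m0.
  have h2 : C%:R * ln (n.+1%:R : R) <= c * ln (n.+1%:R : R).
    by rewrite ler_wpM2r // /c lerDl.
  have h3 := ler_wpM2l (ltW c0) h1.
  have e3 : c * (n.+1%:R / m) = e * n.+1%:R / 4.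
    rewrite /m; field; rewrite ?gt_eqF //.
  rewrite mulrDr e3 in h3; rewrite /K; lra.
pose N := (Num.Def.archi_bound (2 * `|K| / e)).+1.
have hN := @archi_boundP R (2 * `|K| / e) (divr_ge0 (mulr_ge0 (ler0n _ 2) (normr_ge0 K)) (ltW e0)).
exists N => // n /= hn.
have n0 : (0 < n)%N by apply: leq_trans hn.
have nR0 : 0 < (n%:R : R) by rewrite ltr0n.
have hnK : 2 * `|K| / e < n%:R.
  apply: (lt_le_trans hN); rewrite ler_nat; exact: ltnW.
have hK2 : 2 * `|K| < n%:R * e.
  by rewrite -ltr_pdivrMr.
rewrite sub0r normrN ger0_norm; last by rewrite mulr_ge0 // invr_ge0 ltW.
rewrite mulrC ler_pdivrMr //.
have := hK n; have : K <= `|K| by apply: ler_norm.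
have : (n.+1%:R : R) = n%:R + 1 by rewrite -natr1.
have : 1 <= (n%:R : R) by rewrite ler1n.
move=> h1 h2 h3 h4.
rewrite h2 in h4.
have hen : e <= e * n%:R by rewrite ler_peMr // ltW.
lra.
Qed.
Local Close Scope classical_set_scope.
Local Open Scope nat_scope.

Lemma cnt n (m : n.-tuple bool) : count id m = #|[set i | tnth m i]|.
Proof.
have -> : #|[set i | tnth m i]| = #|tnth m|. by apply: eq_card => i; rewrite inE.
rewrite cardE /enum_mem size_filter -{1}(map_tnth_enum m) count_map.
by rewrite enumT.
Qed.

Lemma cons_inj n (b : bool) : injective (fun t : n.-tuple bool => [tuple of b :: t]).
Proof. by move=> t t' /(congr1 val) [] /val_inj. Qed.

Lemma card_split n (A : {set n.+1.-tuple bool}) :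
  #|A| = #|[set t : n.-tuple bool | [tuple of false :: t] \in A]| +
         #|[set t : n.-tuple bool | [tuple of true :: t] \in A]|.
Proof.
set A0 := [set t | _ \in A]; set A1 := [set t | _ \in A].
have -> : A = [set [tuple of false :: t] | t : n.-tuple bool in A0] :|:
              [set [tuple of true :: t] | t : n.-tuple bool in A1].
  apply/setP => t; rewrite inE; apply/idP/idP.
    move=> ht; rewrite (tuple_eta t) in ht *; case: (thead t) ht => ht.
      by apply/orP; right; apply/imsetP; exists [tuple of behead t]; rewrite // inE.
    by apply/orP; left; apply/imsetP; exists [tuple of behead t]; rewrite // inE.
  by case/orP => /imsetP [u]; rewrite inE => hu ->.
have hI : [set [tuple of false :: t] | t : n.-tuple bool in A0] :&:
          [set [tuple of true :: t] | t : n.-tuple bool in A1] = finset.set0.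
  apply/setP => t; rewrite !inE; apply/negP => /andP [/imsetP [u _ ->] /imsetP [u' _]].
  by move/(congr1 val) => [].
by rewrite cardsU hI cards0 subn0 !card_imset //; exact: cons_inj.
Qed.

Definition shatP n (F : {set n.-tuple bool}) (m : n.-tuple bool) : bool :=
  [forall v : n.-tuple bool,
     [exists f in F, [forall i, tnth m i ==> (tnth f i == tnth v i)]]].
Definition shat n (F : {set n.-tuple bool}) : {set n.-tuple bool} :=
  [set m | shatP F m].

Lemma shat_step n (F : {set n.+1.-tuple bool}) (m : n.-tuple bool) (c : bool) :
  (forall v : n.+1.-tuple bool, exists b, (c ==> (b == thead v)) &&
       (shatP [set t : n.-tuple bool | [tuple of b :: t] \in F] m)) ->
  shatP F [tuple of c :: m].
Proof.
move=> h; apply/forallP => v; move: h.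
case/(_ v) => b /andP [hbc].
move=> /forallP /(_ [tuple of behead v]) /existsP [f' /andP [hf' /forallP hag]].
apply/existsP; exists [tuple of b :: f']; apply/andP; split.
  by move: hf'; rewrite inE.
apply/forallP => i; case: (unliftP ord0 i) => [j ->|->].
  rewrite !tnthS [in X in _ ==> (_ == X)](tuple_eta v) tnthS; exact: hag.
by rewrite !tnth0; case: c hbc => //= /eqP ->.
Qed.

Lemma pajor n (F : {set n.-tuple bool}) : #|F| <= #|shat F|.
Proof.
elim: n F => [|n IH] F.
  case: (set_0Vmem F) => [->|[f hf]]; first by rewrite cards0.
  have -> : shat F = [set: 0.-tuple bool].
    apply/setP => m; rewrite !inE /shatP; apply/forallP => v; apply/existsP; exists f.
    by rewrite hf; apply/forallP => -[].
  by rewrite cardsT max_card.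
rewrite (card_split F) (card_split (shat F)).
set F0 := [set t | _ \in F]; set F1 := [set t | _ \in F].
apply: (leq_trans (leq_add (IH F0) (IH F1))).
rewrite -cardsUI; apply: leq_add; apply: subset_leq_card; apply/fintype.subsetP => m; rewrite !inE.
  case/orP => hm; apply: shat_step => v.
    by exists false; rewrite hm.
  by exists true; rewrite hm.
case/andP => hm0 hm1; apply: shat_step => v.
by exists (thead v); rewrite eqxx /=; case: (thead v).
Qed.

Lemma count_bound n N : #|[set m : n.-tuple bool | count id m < N]| <= n.+1 ^ N.
Proof.
elim: n N => [|n IH] N.
  by rewrite exp1n (leq_trans (max_card _)) // card_tuple.
rewrite card_split.
case: N => [|N].
  rewrite expn0 (_ : [set t : n.-tuple bool | _ \in _] = finset.set0); last first.
    by apply/setP => t; rewrite !inE ltn0.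
  rewrite (_ : [set t : n.-tuple bool | _ \in _] = finset.set0) ?cards0 //.
  by apply/setP => t; rewrite !inE ltn0.
have -> : [set t : n.-tuple bool | [tuple of false :: t] \in [set m : n.+1.-tuple bool | count id m < N.+1]]
   = [set m : n.-tuple bool | count id m < N.+1] by apply/setP => t; rewrite !inE.
have -> : [set t : n.-tuple bool | [tuple of true :: t] \in [set m : n.+1.-tuple bool | count id m < N.+1]]
   = [set m : n.-tuple bool | count id m < N] by apply/setP => t; rewrite !inE /= add1n ltnS.
apply: (leq_trans (leq_add (IH N.+1) (IH N))).
have hle : n.+1 ^ N <= n.+2 ^ N.
  by elim: (N) => // N' IH'; rewrite !expnS leq_mul.
rewrite expnS [n.+2 ^ N.+1]expnS addnC -mulSn; exact: leq_mul (leqnn _) hle.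
Qed.
Lemma nip_count (M : Type) (m k n N : nat) (Phi : set ('I_(m + k) -> M))
  (a : 'I_n -> ('I_m -> M)) :
  (forall aa : 'I_N -> ('I_m -> M),
      ~ (forall J : set 'I_N, exists b : 'I_k -> M,
           forall i : 'I_N, Phi (tconcat (aa i) b) <-> J i)) ->
  #|[set v : n.-tuple bool |
      `[< exists x : 'I_k -> M, v = [tuple `[< Phi (tconcat (a i) x) >] | i < n] >] ]|
  <= n.+1 ^ N.
Proof.
move=> hnip; set F := [set v : n.-tuple bool | _].
apply: (leq_trans (pajor F)); apply: (leq_trans _ (count_bound n N)).
apply: subset_leq_card; apply/fintype.subsetP => mm; rewrite !inE => hsh.
rewrite ltnNge; apply/negP => hN; rewrite cnt in hN.
set S := [set i | tnth mm i] in hN.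
pose e (t : 'I_N) : 'I_n := enum_val (widen_ord hN t).
have e_inj : injective e.
  by move=> t t' /enum_val_inj /(congr1 val) /= /val_inj.
have eS : forall t, tnth mm (e t).
  by move=> t; have := enum_valP (widen_ord hN t); rewrite inE.
apply: (hnip (fun t => a (e t))) => J.
pose v : n.-tuple bool := [tuple `[< exists t, e t = i /\ J t >] | i < n].
move/forallP: hsh => /(_ v) /existsP [f /andP [hf /forallP hag]].
move: hf; rewrite inE => /asboolP [x hfx].
exists x => t.
have := hag (e t); rewrite eS /= hfx !tnth_mktuple => /eqP heq.
split.
  move=> hP; have : `[< Phi (tconcat (a (e t)) x) >] by apply/asboolP.
  rewrite heq => /asboolP [t' [/e_inj -> //]].
move=> hJ; have : `[< exists t0, e t0 = e t /\ J t0 >] by apply/asboolP; exists t.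
by rewrite -heq => /asboolP.
Qed.
Lemma foldr_mul_bound (r : seq nat) B :
  (forall x, x \in r -> x <= B) -> foldr muln 1 r <= B ^ size r.
Proof.
elim: r => [|x r IH] h //=.
rewrite expnS leq_mul //; first by apply: h; rewrite inE eqxx.
by apply: IH => y hy; apply: h; rewrite inE hy orbT.
Qed.

Lemma pattern_count (T : Type) (n p B : nat) (cellp : {ffun 'I_n -> 'I_p} -> T -> Prop)
  (tr : 'I_p -> T -> n.-tuple bool) (F : 'I_p -> {set n.-tuple bool}) :
  inhabited T ->
  (forall j x, tr j x \in F j) ->
  (forall j, #|F j| <= B) ->
  (forall s s' x x', cellp s x -> cellp s' x' -> (forall j, tr j x = tr j x') -> s = s') ->
  #|[set s | `[< exists x, cellp s x >]]| <= B ^ p.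
Proof.
move=> [t0] hF hB hinj.
have [wit hwit] : {wit : {ffun 'I_n -> 'I_p} -> T &
    forall s, (exists x, cellp s x) -> cellp s (wit s)}.
  apply: (@choice _ _ (fun s y => (exists x, cellp s x) -> cellp s y)) => s; case: (pselect (exists x, cellp s x)) => [[x hx]|hn].
    by exists x.
  by exists t0.
pose phi (s : {ffun 'I_n -> 'I_p}) : {ffun 'I_p -> n.-tuple bool} :=
  [ffun j => tr j (wit s)].
set S := [set s | _].
rewrite -(@card_in_imset _ _ phi S); last first.
  move=> s s'; rewrite !inE => hs hs' hphi.
  apply: (hinj s s' (wit s) (wit s')); [exact: hwit|exact: hwit|] => j.
  by have := congr1 (fun f : {ffun 'I_p -> n.-tuple bool} => f j) hphi; rewrite /phi !ffunE.
apply: (@leq_trans #|family (fun j => mem (F j))|).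
  apply: subset_leq_card; apply/fintype.subsetP => f /imsetP [s _ ->].
  by apply/familyP => j; rewrite /phi ffunE hF.
rewrite card_family; have := @foldr_mul_bound [seq #|mem (F j)| | j : 'I_p] B.
rewrite size_map size_enum_ord; apply => x /mapP [j _ ->].
exact: hB.
Qed.
Local Open Scope ring_scope.
Lemma sum_ind (R : realType) (T : finType) (b : pred T) :
  \sum_(s : T) ((b s)%:R : R) = (#|[set s | b s]|)%:R.
Proof.
rewrite (eq_bigr (fun s => ((b s : nat))%:R)) // -natr_sum; congr _%:R.
rewrite -sum1_card [in RHS]big_mkcond /=; apply: eq_bigr => s _; rewrite inE.
by case: (b s).
Qed.

Lemma count_main (R : realType) (M : Type) (k n p N : nat) (Nf : 'I_p -> nat)
  (Phi : 'I_p -> set ('I_(k + k) -> M)) (a : 'I_n -> ('I_k -> M))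
  (cellp : {ffun 'I_n -> 'I_p} -> ('I_k -> M) -> Prop) :
  inhabited ('I_k -> M) ->
  (forall j (aa : 'I_(Nf j) -> ('I_k -> M)),
      ~ (forall J : set 'I_(Nf j), exists b : 'I_k -> M,
           forall i, Phi j (tconcat (aa i) b) <-> J i)) ->
  (forall j, (Nf j <= N)%N) ->
  (forall s x, cellp s x -> forall i, Phi (s i) (tconcat (a i) x)) ->
  (forall x j j' i, Phi j (tconcat (a i) x) -> Phi j' (tconcat (a i) x) -> j = j') ->
  \sum_(s : {ffun 'I_n -> 'I_p}) ((`[< exists x, cellp s x >] : bool)%:R : R)
    <= ((n.+1 ^ N) ^ p)%:R.
Proof.
move=> hinh hnip hNf hcell hdisj.
rewrite sum_ind ler_nat.
pose tr (j : 'I_p) (x : 'I_k -> M) : n.-tuple bool :=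
  [tuple `[< Phi j (tconcat (a i) x) >] | i < n].
pose F (j : 'I_p) := [set v : n.-tuple bool | `[< exists x, v = tr j x >] ].
apply: (@pattern_count _ n p (n.+1 ^ N) cellp tr F hinh).
- by move=> j x; rewrite inE; apply/asboolP; exists x.
- move=> j; rewrite /F /tr; apply: (leq_trans (nip_count a (hnip j))).
  by rewrite leq_pexp2l.
- move=> s s' x x' hx hx' htr; apply/ffunP => i.
  have h1 := hcell _ _ hx i; have h2 := hcell _ _ hx' i.
  have : tnth (tr (s i) x) i by rewrite tnth_mktuple; apply/asboolP.
  rewrite htr tnth_mktuple => /asboolP h3.
  exact: (hdisj _ _ _ _ h3 h2).
Qed.
Local Open Scope classical_set_scope.
Local Open Scope ring_scope.

Lemma mu_set0 (R : realType) (M : Type) (D : forall n, set (set ('I_n -> M))) k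
  (G : set ('I_k -> M)) (mu : set ('I_k -> M) -> R) :
  def_system D -> keisler_measure D G mu -> mu set0 = 0.
Proof.
move=> hD [_ _ hadd].
have := hadd set0 set0 (D_set0 _ hD) (D_set0 _ hD) (sub0set _) (sub0set _) (setI0 _).
rewrite setU0 => h; lra.
Qed.

Lemma mu_le1 (R : realType) (M : Type) (D : forall n, set (set ('I_n -> M))) k
  (G : set ('I_k -> M)) (mu : set ('I_k -> M) -> R) U :
  def_system D -> D k G -> keisler_measure D G mu -> D k U -> U `<=` G -> mu U <= 1.
Proof.
move=> hD hG [h0 h1 hadd] hU hUG.
have hV : D k (G `&` ~` U) by apply: (ds_inter hD hG (ds_compl hD hU)).
have hI : U `&` (G `&` ~` U) = set0.
  by apply/seteqP; split => x // [hx [_ hnx]].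
have := hadd U (G `&` ~` U) hU hV hUG (@subIsetl _ _ _) hI.
have -> : U `|` (G `&` ~` U) = G.
  apply/seteqP; split => x.
    by case=> [/hUG|[]].
  by move=> hx; case: (pselect (U x)) => hux; [left|right].
rewrite h1.
have := h0 _ hV (@subIsetl _ _ _).
lra.
Qed.

Lemma mu_union (R : realType) (M : Type) (D : forall n, set (set ('I_n -> M))) k
  (G : set ('I_k -> M)) (mu : set ('I_k -> M) -> R) (T : eqType)
  (C : T -> set ('I_k -> M)) (r : seq T) :
  def_system D -> keisler_measure D G mu -> uniq r ->
  (forall s, D k (C s)) -> (forall s, C s `<=` G) ->
  (forall s s', s != s' -> C s `&` C s' = set0) ->
  D k [set x | exists2 s, s \in r & C s x] /\
  mu [set x | exists2 s, s \in r & C s x] = \sum_(s <- r) mu (C s).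
Proof.
move=> hD hmu hr hC hCG hdisj; have hmu' := hmu; case: hmu' => [_ _ hadd].
elim: r hr => [|s r IH] /=.
  move=> _; have -> : [set x | exists2 s, s \in [::] & C s x] = set0.
    by apply/seteqP; split => x // [].
  by rewrite big_nil (mu_set0 hD hmu); split => //; apply: D_set0.
move=> /andP [hs hr]; have [hUd hUm] := IH hr.
have -> : [set x | exists2 s0, s0 \in s :: r & C s0 x] =
          C s `|` [set x | exists2 s, s \in r & C s x].
  apply/seteqP; split => x.
    by move=> [s0]; rewrite inE => /orP [/eqP -> h|h1 h2]; [left|right; exists s0].
  case=> [h|[s0 h1 h2]]; first by exists s; rewrite ?inE ?eqxx.
  by exists s0; rewrite // inE h1 orbT.
split; first exact: D_setU.
rewrite big_cons -hUm; apply: hadd => //.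
  by move=> x [s0 _ h]; exact: hCG h.
apply/seteqP; split => x // [h1 [s0 h2 h3]].
have hne : s != s0 by apply/eqP => hss; rewrite hss h2 in hs.
by have := hdisj _ _ hne; move/seteqP => [/(_ x) hh _]; apply: hh.
Qed.
Unset Implicit Arguments.

Theorem mainTheorem3 (R : realType) (M : Type)
  (D : forall n : nat, set (set ('I_n -> M)))
  (k : nat) (G : set ('I_k -> M))
  (mul : ('I_k -> M) -> ('I_k -> M) -> ('I_k -> M))
  (mu : set ('I_k -> M) -> R) :
  def_system D -> NIP D -> definable_group D G mul ->
  keisler_measure D G mu -> invariant_measure D G mul mu ->
  forall g : 'I_k -> M, G g ->
  forall (p : nat) (P : 'I_p -> set ('I_k -> M)), definable_partition D G P ->
    (fun n : nat => (n%:R)^-1 * join_entropy G mul mu g P n) @ \oo --> (0 : R).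
Proof.
move=> hD hNIP hgrp hmu _ g hg p P hpart.
case: hgrp => hGdef [Gr [hGr hGrs]] hmulG hassoc [e he heid].
have hmu' := hmu; case: hmu' => [mu0 muG muadd].
case: hpart => hPdef hPG hPdisj hPcov.
pose a (i : nat) := iter i (mul g) e.
have aG : forall i, G (a i).
  by elim => [|i IH] //=; apply: hmulG.
have iterE : forall i x, G x -> iter i (mul g) x = mul (a i) x.
  elim => [|i IH] x hx /=; first by have [-> _ _] := heid x hx.
  by rewrite IH // hassoc.
have iterG : forall i x, G x -> G (iter i (mul g) x).
  by move=> i x hx; rewrite iterE //; apply: hmulG.
have tauE : forall i U x, G x ->
    (iter i (tau_inv G mul g) U x <-> U (iter i (mul g) x)).
  elim => [|i IH] U x hx; first by [].
  rewrite [iter i.+1 (mul g) x]iterSr /= /tau_inv /=; split.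
    by move=> [_ h]; apply/(IH _ _ (hmulG _ _ hg hx)).
  by move=> h; split => //; apply/(IH _ _ (hmulG _ _ hg hx)).
pose Phi (j : 'I_p) := [set z : 'I_(k + k) -> M | exists w, Gr (tconcat z w) /\ P j w].
have hPhi : forall j, D (k + k) (Phi j) by move=> j; exact: (D_graph hD hGr (hPdef j)).
have PhiE : forall j y x, Phi j (tconcat y x) <-> [/\ G y, G x & P j (mul y x)].
  move=> j y x; split.
    by move=> [w [/hGrs [hy [hx ->]] hw]].
  by move=> [hy hx hw]; exists (mul y x); split => //; apply/hGrs.
have [Nf hNf] := @choice _ _ (fun (j : 'I_p) (N : nat) =>
   forall aa : 'I_N -> ('I_k -> M), ~ (forall J : set 'I_N, exists b : 'I_k -> M,
           forall i : 'I_N, Phi j (tconcat (aa i) b) <-> J i))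
   (fun j => hNIP k k (Phi j) (hPhi j)).
pose N := (\max_(j < p) Nf j)%N.
have hNfN : forall j, (Nf j <= N)%N by move=> j; apply: leq_bigmax.
have hinh : inhabited ('I_k -> M) by case: (ds_nonempty hD) => m0; constructor => _.
have key : forall n : nat, 0 <= join_entropy G mul mu g P n /\
    join_entropy G mul mu g P n <= 1 + (N * p)%:R * ln (n.+1%:R).
  move=> n.
  pose C (s : {ffun 'I_n -> 'I_p}) :=
    [set x | G x /\ forall i : 'I_n, iter i (tau_inv G mul g) (P (s i)) x].
  have CE : forall s x, C s x <-> G x /\ forall i : 'I_n, Phi (s i) (tconcat (a i) x).
    move=> s x; split.
      move=> [hx h]; split => // i; apply/PhiE; split => //.
      by rewrite -iterE //; apply/(tauE _ _ _ hx).
    move=> [hx h]; split => // i; apply/(tauE _ _ _ hx); rewrite iterE //.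
    by have /PhiE [] := h i.
  have hCdef : forall s, D k (C s).
    move=> s; apply: (D_ext (ds_inter hD hGdef (D_bigI (F := fun i : 'I_n =>
       [set x | Phi (s i) (tconcat (a i) x)]) (enum 'I_n) hD
       (fun i => D_subst (a i) hD (hPhi (s i)))))) => x.
    rewrite CE; split.
      by move=> [hx h]; split => // i; apply: h; rewrite mem_enum.
    by move=> [hx h]; split => // i _; apply: h.
  have hCG : forall s, C s `<=` G by move=> s x [].
  have hCdisj : forall s s', s != s' -> C s `&` C s' = set0.
    move=> s s' hss; apply/seteqP; split => x // [/CE [hx h1] /CE [_ h2]].
    have [i hi] : exists i, s i != s' i.
      apply: contrapT => hn; move/eqP: hss; apply; apply/ffunP => i.
      by apply/eqP; apply: contrapT => h; apply: hn; exists i; apply/negP.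
    have /PhiE [_ _ hp1] := h1 i; have /PhiE [_ _ hp2] := h2 i.
    by have := hPdisj _ _ hi; move/seteqP => [/(_ (mul (a i) x)) hh _]; apply: hh.
  have [hUdef hUsum] := mu_union hD hmu (index_enum_uniq {ffun 'I_n -> 'I_p})
    hCdef hCG hCdisj.
  have hsum1 : \sum_(s : {ffun 'I_n -> 'I_p}) mu (C s) <= 1.
    rewrite -hUsum; apply: (mu_le1 hD hGdef hmu hUdef).
    by move=> x [s _ /hCG].
  have hq0 : forall s, 0 <= mu (C s) by move=> s; apply: mu0.
  have hq1 : forall s, mu (C s) <= 1 by move=> s; apply: (mu_le1 hD hGdef hmu).
  have hempty : forall s, ~ (exists x, C s x) -> mu (C s) = 0.
    move=> s hn; have -> : C s = set0.
      by apply/seteqP; split => x // hx; apply: hn; exists x.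
    exact: (mu_set0 hD hmu).
  have hPhidisj : forall x j j' (i : 'I_n), Phi j (tconcat (a i) x) ->
      Phi j' (tconcat (a i) x) -> j = j'.
    move=> x j j' i /PhiE [_ _ h1] /PhiE [_ _ h2]; apply/eqP; apply: contrapT => /negP hne.
    by have := hPdisj _ _ hne; move/seteqP => [/(_ (mul (a i) x)) hh _]; apply: hh.
  have hcnt := @count_main R M k n p N Nf Phi (fun i : 'I_n => a i) C hinh hNf hNfN
    (fun s x hx => (proj2 (proj1 (CE s x) hx))) hPhidisj.
  set L : R := ((n.+1 ^ N) ^ p)%:R in hcnt.
  have L1 : 1 <= L by rewrite /L ler1n !expn_gt0.
  have L0 : 0 < L by apply: lt_le_trans L1.
  have lnL : ln L = (N * p)%:R * ln (n.+1%:R).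
    by rewrite /L -expnM natrX lnXn // mulr_natl.
  rewrite -lnL; split.
    rewrite /join_entropy -sumrN; apply: sumr_ge0 => s _; rewrite oppr_ge0.
    exact: (xlogx_le0 (hq0 s) (hq1 s)).
  have hb : forall s, mu (C s) != 0 -> `[< exists x, C s x >].
    move=> s hne; apply/asboolP; apply: contrapT => hn; move: hne.
    by rewrite hempty // eqxx.
  rewrite /join_entropy -sumrN.
  apply: (le_trans (ler_sum _ (fun s _ => xlogx_bound (hq0 s) L0 (hb s)))).
  rewrite big_split /= -mulr_suml -mulr_suml.
  have h1 : (\sum_(i : {ffun 'I_n -> 'I_p}) (`[< exists x, C i x >])%:R) / L <= 1.
    by rewrite ler_pdivrMr // mul1r.
  have h2 : (\sum_(i : {ffun 'I_n -> 'I_p}) mu (C i)) * ln L <= 1 * ln L.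
    by rewrite ler_wpM2r // ln_ge0.
  lra.
apply: (@lim_bound R (N * p)%N) => n; [exact: (key n).1 | exact: (key n).2].
Qed.
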